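(* Let $\mathcal{N}$ be a one-counter net. If Eve wins the one-token game $G_1$ on $\mathcal{N}$, then Eve has a winning strategy in the letter game on $\mathcal{N}$.
   Context: A one-counter net (OCN) is $\mathcal{N}=(Q,\Sigma,\Delta,q_0,F)$ with $Q$ finite, $\Sigma$ finite, $q_0\in Q$, $F\subseteq Q$, $\Delta\subseteq Q\times\Sigma\times\{-1,0,1\}\times Q$; configurations $(q,n)\in Q\times\mathbb{N}$, step $(q,n)\xrightarrow{a,d}(p,n+d)$ if $(q,a,d,p)\in\Delta$ and $n+d\ge0$; runs start at $(q_0,0)$ and are accepting if the last state is in $F$; $\mathcal{L}(\mathcal{N})$ is the set of words with an accepting run. Letter game: positions $(c,w)$, start $((q_0,0),\varepsilon)$; each round Adam picks $a\in\Sigma$, Eve picks a step $c\xrightarrow{a,d}c'$; if Eve has none and $wa$ is a prefix of a word of $\mathcal{L}(\mathcal{N})$ she loses; if $wa\in\mathcal{L}(\mathcal{N})$ but the state of $c'$ is not in $F$, Adam wins; otherwise continue from $(c',wa)$; Eve wins infinite plays. The game $G_1$ on $\mathcal{N}$: positions are pairs $(c^{E},c^{A})$ of configurations (Eve's token, Adam's token), starting at $((q_0,0),(q_0,0))$. Each round: Adam picks $a\in\Sigma$; Eve picks a step $c^E\xrightarrow{a,d}c^E_{+}$ for her token; Adam picks a step $c^A\xrightarrow{a,d'}c^A_{+}$ for his token. If Adam cannot move his token, he loses. If Eve cannot move her token while Adam can move his and extend his run to an accepting run, Eve loses. If both move and the state of $c^A_+$ is in $F$ but that of $c^E_+$ is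 not, Eve loses. Otherwise play continues from $(c^E_+,c^A_+)$; Eve wins infinite plays. *)

(* Defs.v *)
From HB Require Import structures.
From mathcomp Require Import all_boot all_order all_algebra.
Set Implicit Arguments. Unset Strict Implicit. Unset Printing Implicit Defensive.
Import Order.TTheory GRing.Theory Num.Theory.

Record ocn (Q Sigma : finType) := OCN {
  trans : Q -> Sigma -> int -> Q -> bool;
  init : Q;
  final : {set Q};
  trans_dir : forall q a d p, trans q a d p -> d \in [:: (-1)%R; 0%R; 1%R]
}.

Section OCN.
Variables (Q Sigma : finType) (N : ocn Q Sigma).

Definition conf := (Q * nat)%type.
Definition conf0 : conf := (init N, 0%N).

(* one step (q,n) --a,d--> (p, n+d), with n + d >= 0 *)
Definition step (c : conf) (a : Sigma) (c' : conf) : Prop :=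
  exists d : int, trans N c.1 a d c'.1 /\ (Posz c'.2 = Posz c.2 + d)%R.

Fixpoint reach (c : conf) (w : seq Sigma) (c' : conf) : Prop :=
  match w with
  | [::] => c = c'
  | a :: w' => exists c'', step c a c'' /\ reach c'' w' c'
  end.

Definition lang (w : seq Sigma) : Prop :=
  exists c', reach conf0 w c' /\ c'.1 \in final N.

Definition prefixL (w : seq Sigma) : Prop := exists u, lang (w ++ u).

Definition can_accept (c : conf) : Prop :=
  exists u c', reach c u c' /\ c'.1 \in final N.

(* An Eve strategy: given the word played so far and Adam's new letter, return
   the configuration her step leads to (None = she does not move). *)
Definition lg_strategy := seq Sigma -> Sigma -> option conf.

Fixpoint lg_conf_aux (s : lg_strategy) (pre : seq Sigma) (c : conf)
    (w : seq Sigma) : option conf :=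
  match w with
  | [::] => Some c
  | a :: w' => match s pre a with
               | Some c' => lg_conf_aux s (rcons pre a) c' w'
               | None => None
               end
  end.

Definition lg_conf (s : lg_strategy) (w : seq Sigma) := lg_conf_aux s [::] conf0 w.

Definition lg_winning (s : lg_strategy) : Prop :=
  forall w c a, lg_conf s w = Some c ->
    match s w a with
    | Some c' => step c a c' /\ (lang (rcons w a) -> c'.1 \in final N)
    | None => (forall c', ~ step c a c') /\ ~ prefixL (rcons w a)
    end.

Definition eve_wins_letter_game : Prop := exists s, lg_winning s.

(* History: the list of rounds, each recorded as (letter, Adam's new config).
   Eve's strategy: from the history and Adam's new letter, her token's new
   configuration (None = she does not move). *)
Definition g1_strategy := seq (Sigma * conf) -> Sigma -> option conf.

Fixpoint g1_eve_aux (t : g1_strategy) (pre : seq (Sigma * conf)) (c : conf)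
    (h : seq (Sigma * conf)) : option conf :=
  match h with
  | [::] => Some c
  | (a, cA) :: h' => match t pre a with
                         | Some c' => g1_eve_aux t (rcons pre (a, cA)) c' h'
                         | None => None
                         end
  end.

Definition g1_eve (t : g1_strategy) h := g1_eve_aux t [::] conf0 h.

Fixpoint adam_valid (c : conf) (h : seq (Sigma * conf)) : Prop :=
  match h with
  | [::] => True
  | (a, c') :: h' => step c a c' /\ adam_valid c' h'
  end.

Definition adam_conf (h : seq (Sigma * conf)) : conf := last conf0 (map snd h).

Definition g1_winning (t : g1_strategy) : Prop :=
  forall h cE a, adam_valid conf0 h -> g1_eve t h = Some cE ->
    let cA := adam_conf h in
    match t h a with
    | Some cE' => step cE a cE' /\
        (forall cA', step cA a cA' -> cA'.1 \in final N -> cE'.1 \in final N)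
    | None => (forall c', ~ step cE a c') /\
        ~ (exists cA', step cA a cA' /\ can_accept cA')
    end.

Definition eve_wins_G1 : Prop := exists t, g1_winning t.

End OCN.

(* Main.v *)
Require Import Defs.
From mathcomp Require Import all_boot all_order all_algebra.
From Stdlib Require Import ClassicalEpsilon.

Set Implicit Arguments. Unset Strict Implicit. Unset Printing Implicit Defensive.

Section Proof.
Variables (Q Sigma : finType) (N : ocn Q Sigma).

Local Notation C := (conf Q).
Local Notation fin c := (c.1 \in final N).

Definition post (P : C -> C -> Prop) : Prop :=
  forall e A, P e A -> forall a,
    (exists e', step N e a e' /\
       forall A', step N A a A' -> (fin A' -> fin e') /\ P e' A')
    \/ ((forall e', ~ step N e a e') /\
        ~ (exists A', step N A a A' /\ can_accept N A')).

Definition Rmax (e A : C) : Prop := exists P, post P /\ P e A.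

Lemma post_le P : post P -> forall e A, P e A -> Rmax e A.
Proof. by move=> hP e A h; exists P. Qed.

Lemma Rmax_post : post Rmax.
Proof.
move=> e A [P [hP hPeA]] a.
case: (hP e A hPeA a) => [[e' [he H]]|H]; last by right.
left; exists e'; split=> // A' hA'; have [h1 h2] := H A' hA'.
by split=> //; exists P.
Qed.

Lemma final_acc c : fin c -> can_accept N c.
Proof. by move=> h; exists [::], c. Qed.

Lemma step_acc c a c' : step N c a c' -> can_accept N c' -> can_accept N c.
Proof. by move=> hs [u [c'' [hr hf]]]; exists (a :: u), c''; split=> //; exists c'. Qed.

Lemma acc_transfer : forall u b e A c, Rmax e A -> reach N A (b :: u) c ->
  fin c -> can_accept N e.
Proof.
elim=> [|b' u IH] b e A c hR [A' [hs hr]] hf.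
  case: (Rmax_post hR b) => [[e' [he H]]|[_ hn]].
    have [f _] := H A' hs; apply: step_acc he _; apply: final_acc; apply: f.
    by move: hr => /= ->.
  by case: hn; exists A'; split=> //; apply: final_acc; move: hr => /= ->.
case: (Rmax_post hR b) => [[e' [he H]]|[_ hn]].
  have [_ r] := H A' hs; apply: step_acc he _; exact: IH r hr hf.
by case: hn; exists A'; split=> //; exists (b' :: u), c.
Qed.

Definition Comp (x z : C) : Prop :=
  (exists y, Rmax x y /\ Rmax y z) \/ ~ can_accept N z.

Lemma Comp_post : post Comp.
Proof.
move=> x z hC a.
have triv : ~ (exists z', step N z a z' /\ can_accept N z') ->
  (exists e', step N x a e' /\
       forall A', step N z a A' -> (fin A' -> fin e') /\ Comp e' A')
    \/ ((forall e', ~ step N x a e') /\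
        ~ (exists A', step N z a A' /\ can_accept N A')).
  move=> hn.
  case: (classic (exists x', step N x a x')) => [[x' hx']|hnx].
    left; exists x'; split=> // A' hA'; split.
      by move=> hf; exfalso; apply: hn; exists A'; split=> //; apply: final_acc.
    by right=> hacc; apply: hn; exists A'.
  by right; split=> // e' he'; apply: hnx; exists e'.
case: hC => [[y [hxy hyz]]|hnz]; last first.
  apply: triv; move=> [z' [hs hacc]]; apply: hnz; exact: step_acc hs hacc.
case: (Rmax_post hyz a) => [[y' [hy' Hy]]|[_ hn]]; last exact: triv.
case: (Rmax_post hxy a) => [[x' [hx' Hx]]|[hny hn2]]; last first.
  right; split=> // -[z' [hz' [u [c [hr hf]]]]].
  apply: hn2; exists y'; split=> //.
  have [f1 r1] := Hy z' hz'.
  case: u hr => [|b u] hr.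
    by apply: final_acc; apply: f1; move: hr => /= ->.
  exact: acc_transfer r1 hr hf.
left; exists x'; split=> // z' hz'.
have [f1 r1] := Hy z' hz'; have [f2 r2] := Hx y' hy'.
split; first by move=> /f1 /f2.
by left; exists y'.
Qed.

Lemma Rmax_trans x y z : Rmax x y -> Rmax y z -> Rmax x z.
Proof. by move=> h1 h2; apply: (post_le Comp_post); left; exists y. Qed.

Lemma g1_eve_aux_rcons (t : g1_strategy Q Sigma) pre c h a cA :
  g1_eve_aux t pre c (rcons h (a, cA)) =
  match g1_eve_aux t pre c h with Some _ => t (pre ++ h) a | None => None end.
Proof.
elim: h pre c => [|[b cB] h IH] pre c /=.
  by rewrite cats0; case: (t pre a).
case: (t pre b) => [c'|] //; by rewrite IH cat_rcons.
Qed.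

Lemma adam_valid_rcons c h a cA :
  adam_valid N c h -> step N (last c (map snd h)) a cA ->
  adam_valid N c (rcons h (a, cA)).
Proof.
elim: h c => [|[b cB] h IH] c /=; first by move=> _ hs; split.
by move=> [hs hv] hl; split=> //; apply: IH.
Qed.

Lemma G1_Rmax : eve_wins_G1 N -> Rmax (conf0 N) (conf0 N).
Proof.
move=> [t ht].
pose P := fun e A => exists h, adam_valid N (conf0 N) h /\
   g1_eve N t h = Some e /\ adam_conf N h = A.
apply: (post_le (P := P)); last by exists [::].
move=> e A [h [hv [he hA]]] a.
have := ht h e a hv he; rewrite /= hA.
case E: (t h a) => [e'|] [H1 H2]; last by right.
left; exists e'; split=> // A' hA'; split; first exact: H2.
exists (rcons h (a, A')); split.
  by apply: adam_valid_rcons=> //; rewrite -/(adam_conf N h) hA.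
split; first by rewrite /g1_eve g1_eve_aux_rcons -/(g1_eve N t h) he.
by rewrite /adam_conf map_rcons last_rcons.
Qed.

Lemma reach_cat c w v c' :
  reach N c (w ++ v) c' <-> exists m, reach N c w m /\ reach N m v c'.
Proof.
elim: w c => [|a w IH] c /=.
  by split; [move=> h; exists c | move=> [m [<- h]]].
split.
  move=> [c'' [hs hr]]; have [m [h1 h2]] := (IH c'').1 hr.
  by exists m; split=> //; exists c''.
move=> [m [[c'' [hs hr]] h2]]; exists c''; split=> //.
by apply/(IH c''); exists m.
Qed.

Lemma reach_rcons c w a c' :
  reach N c (rcons w a) c' <-> exists m, reach N c w m /\ step N m a c'.
Proof.
rewrite -cats1 reach_cat; split.
  by move=> [m [h1 [c'' [hs <-]]]]; exists m.
by move=> [m [h1 hs]]; exists m; split=> //; exists c'.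
Qed.

Definition good (e : C) (a : Sigma) (e' : C) : Prop :=
  step N e a e' /\ forall A', step N e a A' -> (fin A' -> fin e') /\ Rmax e' A'.

Definition mv (e : C) (a : Sigma) : option C :=
  match excluded_middle_informative (exists e', good e a e') with
  | left h => Some (proj1_sig (constructive_indefinite_description _ h))
  | right _ => None
  end.

Lemma mvP e a :
  match mv e a with
  | Some e' => good e a e'
  | None => ~ exists e', good e a e'
  end.
Proof.
rewrite /mv; case: excluded_middle_informative => // h.
exact: proj2_sig (constructive_indefinite_description _ h).
Qed.

Definition cur (w : seq Sigma) : option C :=
  foldl (fun o a => match o with Some e => mv e a | None => None end)
        (Some (conf0 N)) w.

Definition strat : lg_strategy Q Sigma :=
  fun w a => match cur w with Some e => mv e a | None => None end.

Lemma foldl_none w :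
  foldl (fun o a => match o with Some e => mv e a | None => None end) None w = None.
Proof. by elim: w. Qed.

Lemma lg_conf_cur : forall w pre c, cur pre = Some c ->
  lg_conf_aux strat pre c w = cur (pre ++ w).
Proof.
elim=> [|a w IH] pre c hc /=; first by rewrite cats0.
rewrite /strat hc -cat_rcons.
have hr : cur (rcons pre a) = mv c a by rewrite /cur foldl_rcons -/(cur pre) hc.
case E: (mv c a) => [c'|].
  by apply: IH; rewrite hr.
by rewrite /cur foldl_cat -/(cur (rcons pre a)) hr E foldl_none.
Qed.

Definition Inv (e : C) (w : seq Sigma) : Prop :=
  [/\ reach N (conf0 N) w e, Rmax e e &
      forall A, reach N (conf0 N) w A -> can_accept N A -> Rmax e A].

Lemma Inv_step e w a e' : Inv e w -> mv e a = Some e' -> Inv e' (rcons w a).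
Proof.
move=> [hr hee hA] hm.
have := mvP e a; rewrite hm => -[hs Hg].
split.
- by apply/reach_rcons; exists e.
- by have [_ h] := Hg e' hs.
move=> A' /reach_rcons [A [hrA hsA]] hacc.
have hAA : Rmax e A by apply: hA => //; apply: step_acc hsA hacc.
case: (Rmax_post hAA a) => [[e'' [hs'' H'']]|[_ hn]]; last first.
  by case: hn; exists A'.
have [_ h1] := H'' A' hsA; have [_ h2] := Hg e'' hs''.
exact: Rmax_trans h2 h1.
Qed.

Lemma cur_Inv : Rmax (conf0 N) (conf0 N) ->
  forall w e, cur w = Some e -> Inv e w.
Proof.
move=> H0; elim/last_ind=> [|w a IH] e.
  move=> [<-]; split=> // A hA _; by rewrite -hA.
rewrite /cur foldl_rcons -/(cur w).
case E: (cur w) => [e0|] // hm.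
exact: Inv_step (IH e0 E) hm.
Qed.

Lemma strat_win : Rmax (conf0 N) (conf0 N) -> lg_winning N strat.
Proof.
move=> H0 w c a hl.
have hc : cur w = Some c.
  by rewrite -hl /lg_conf (lg_conf_cur w (pre:=[::])).
have [hr hcc hA] := cur_Inv H0 hc.
rewrite /strat hc.
have := mvP c a; case: (mv c a) => [e'|] hg.
  have [hs Hg] := hg; split=> // -[c' [/reach_rcons [A [hrA hsA]] hf]].
  have hAA : Rmax c A by apply: hA => //; apply: step_acc hsA (final_acc hf).
  case: (Rmax_post hAA a) => [[e'' [hs'' H'']]|[_ hn]].
    have [f1 _] := H'' c' hsA; have [f2 _] := Hg e'' hs''.
    by apply: f2; apply: f1.
  by case: hn; exists c'; split=> //; apply: final_acc.
case: (Rmax_post hcc a) => [[e' [hs H]]|[hns _]].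
  by case: hg; exists e'.
split=> // -[u [c' [hr' hf]]].
move: hr'; rewrite cat_rcons => /reach_cat [m [hm [m' [hsm hrm]]]].
have hmm : Rmax c m by apply: hA => //; exists (a :: u), c'; split=> //; exists m'.
case: (Rmax_post hmm a) => [[e'' [hs'' _]]|[_ hn]].
  by case: (hns e'' hs'').
by case: hn; exists m'; split=> //; exists u, c'.
Qed.

End Proof.

Theorem lemma1 (Q Sigma : finType) (N : ocn Q Sigma) :
  eve_wins_G1 N -> eve_wins_letter_game N.
Proof.
move=> h; exists (strat N); apply: strat_win; exact: G1_Rmax.
Qed.
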